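(* Let $\mathcal{H}\cong\mathbb{C}^n$, let $\gamma>0$, and let $\mathcal{F}:\mathcal{D}(\mathcal{H})\to\mathcal{B}(\mathcal{H})$ be continuous and satisfy $$0\le\langle x,\mathcal{F}(x)-\mathcal{F}(y)\rangle\le\gamma\, S(x\,\|\,y)\qquad\text{for all }x,y\in\operatorname{relint}\mathcal{D}(\mathcal{H}).$$ Consider the quantum Blahut-Arimoto iterates, started from $x^0\in\operatorname{relint}\mathcal{D}(\mathcal{H})$, $$y^{k+1}=x^k,\qquad x^{k+1}=\frac{\exp\big(\log(y^{k+1})-\mathcal{F}(y^{k+1})/\gamma\big)}{\operatorname{tr}\big[\exp\big(\log(y^{k+1})-\mathcal{F}(y^{k+1})/\gamma\big)\big]},$$ and let $f(x)=\langle x,\mathcal{F}(x)\rangle$ on $\mathcal{D}(\mathcal{H})$. Then these iterates are exactly the mirror descent iterates for minimizing $f$ over $\mathcal{C}=\mathcal{D}(\mathcal{H})$ with kernel $\varphi=-S$ and constant step size $t_k=1/\gamma$, and moreover: (a) $f(x)=\langle x,\nabla f(x)\rangle$ and $\nabla f(x)=\mathcal{F}(x)$ for all $x\in\operatorname{relint}\mathcal{D}(\mathcal{H})$; (b) $f$ is $\gamma$-smooth relative to $-S$ on $\mathcal{D}(\mathcal{H})$. If additionally there is $a>0$ with $\langle x,\mathcal{F}(x)-\mathcal{F}(y)\rangle\ge a\,S(x\,\|\,y)$ for all $x,y\in\operatorname{relint}\mathcal{D}(\mathcal{H})$, then $f$ is also $a$-strongly convex relative to $-S$ on $\mathcal{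D}(\mathcal{H})$.
   Context: $\mathcal{B}(\mathcal{H})$ is the real vector space of self-adjoint operators on $\mathcal{H}$ with inner product $\langle X,Y\rangle=\operatorname{tr}[XY]$; $\mathcal{D}(\mathcal{H})=\{\rho\succeq0:\operatorname{tr}\rho=1\}$ is the set of density matrices, whose relative interior consists of the positive definite density matrices. $S(\rho)=-\operatorname{tr}[\rho\log\rho]$ is the von Neumann entropy and $S(\rho\,\|\,\sigma)=\operatorname{tr}[\rho(\log\rho-\log\sigma)]$ the quantum relative entropy. For a Legendre kernel $\varphi$ (proper, lsc, strictly convex, essentially smooth) with Bregman divergence $D_\varphi(x\,\|\,y)=\varphi(x)-\varphi(y)-\langle\nabla\varphi(y),x-y\rangle$, the mirror descent iterates for minimizing a differentiable $f$ over a convex set $\mathcal{C}\subseteq\operatorname{dom}\varphi$ with step sizes $t_k>0$ are $x^{k+1}=\arg\min_{x\in\mathcal{C}}\{\langle\nabla f(x^k),x\rangle+\frac1{t_k}D_\varphi(x\,\|\,x^k)\}$. For $\varphi=-S$ on positive semidefinite matrices, $D_\varphi(\rho\,\|\,\sigma)=S(\rho\,\|\,\sigma)-\operatorname{tr}[\rho-\sigma]$. $f$ is $L$-smooth (resp. $\mu$-strongly convex) relative to $\varphi$ on $\mathcal{C}$ if $L\varphi-f$ (resp. $f-\mu\varphi$) is convex on $\operatorname{relint}\mathcal{C}$. *)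

(* Defs.v *)
From HB Require Import structures.
From mathcomp Require Import all_boot all_order all_algebra.
From mathcomp Require Import complex sesquilinear spectral.
From mathcomp Require Import boolp reals sequences exp.
Set Implicit Arguments. Unset Strict Implicit. Unset Printing Implicit Defensive.
Import Order.TTheory GRing.Theory Num.Theory.
Local Open Scope ring_scope.
Local Open Scope complex_scope.
Local Open Scope sesquilinear_scope.

Section QBA.
Variables (R : realType) (n : nat).
Local Notation C := R[i].
Local Notation M := 'M[C]_n.

(* B(H): self-adjoint matrices are those in the library's [hermsymmx];
   conjugate transpose A^* is the library's [A ^t*] (sesquilinear_scope). *)
Definition adjmx (A : M) : M := A ^t*.

Definition qform (A : M) (v : 'cV[C]_n) : C := (v ^t* *m A *m v) 0 0.

Definition psdmx (A : M) : Prop := A \is hermsymmx /\ forall v, 0 <= qform A v.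
Definition pdmx (A : M) : Prop := A \is hermsymmx /\ forall v, v != 0 -> 0 < qform A v.

Definition density (A : M) : Prop := psdmx A /\ \tr A = 1.
Definition relint_density (A : M) : Prop := pdmx A /\ \tr A = 1.

Definition ipmx (X Y : M) : R := complex.Re (\tr (X *m Y)).
Definition mxnorm (A : M) : R := Num.sqrt (complex.Re (\tr (A *m adjmx A))).

(* functional calculus f(A) for self-adjoint A, via the library spectral
   decomposition A = P^-1 diag(sp) P with P = spectralmx A unitary
   (the eigenvalues sp are real when A \is hermsymmx) *)
Definition mxfun (f : R -> R) (A : M) : M :=
  let P := spectralmx A in
  invmx P *m diag_mx (\row_i ((f (complex.Re (spectral_diag A 0 i)))%:C)) *m P.

Definition expm (A : M) : M := mxfun (@expR R) A.
Definition logm (A : M) : M := mxfun (@ln R) A.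

(* phi(rho) = -S(rho) = tr[rho log rho], with the convention 0 log 0 = 0 *)
Definition neg_entropy (rho : M) : R := complex.Re (\tr (mxfun (fun t => t * @ln R t) rho)).
Definition vN_entropy (rho : M) : R := - neg_entropy rho.

(* quantum relative entropy S(rho||sigma) = tr[rho log rho] - tr[rho log sigma]
   (used for positive definite sigma) *)
Definition relent (rho sigma : M) : R := neg_entropy rho - complex.Re (\tr (rho *m logm sigma)).

Definition bregman_negS (rho sigma : M) : R := relent rho sigma - complex.Re (\tr (rho - sigma)).

Definition continuous_on_density (F : M -> M) : Prop :=
  forall x, density x -> forall e : R, 0 < e -> exists2 d : R, 0 < d &
    forall y, density y -> mxnorm (y - x) < d -> mxnorm (F y - F x) < e.

Definition is_gradient_at (f : M -> R) (x G : M) : Prop :=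
  forall e : R, 0 < e -> exists2 d : R, 0 < d &
    forall y, density y -> mxnorm (y - x) < d ->
      `|f y - f x - ipmx G (y - x)| <= e * mxnorm (y - x).

Definition convex_on_relint (g : M -> R) : Prop :=
  forall x y (t : R), relint_density x -> relint_density y -> 0 <= t <= 1 ->
    g (t%:C *: x + (1 - t)%:C *: y) <= t * g x + (1 - t) * g y.

Definition rel_smooth (L : R) (f : M -> R) : Prop :=
  convex_on_relint (fun x => L * neg_entropy x - f x).
Definition rel_strongly_convex (mu : R) (f : M -> R) : Prop :=
  convex_on_relint (fun x => f x - mu * neg_entropy x).

Definition is_argmin_density (obj : M -> R) (z : M) : Prop :=
  density z /\ (forall w, density w -> obj z <= obj w) /\
  (forall w, density w -> obj w <= obj z -> w = z).

Definition mirror_descent_step (f : M -> R) (t : R) (xk xk1 : M) : Prop :=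
  forall G, is_gradient_at f xk G ->
    is_argmin_density (fun z => ipmx G z + t^-1 * bregman_negS z xk) xk1.

Definition qba_step (F : M -> M) (gamma : R) (y : M) : M :=
  let E := expm (logm y - (gamma^-1)%:C *: F y) in (\tr E)^-1 *: E.
Definition qba_iter (F : M -> M) (gamma : R) (x0 : M) (k : nat) : M :=
  iter k (qba_step F gamma) x0.

Definition fobj (F : M -> M) (x : M) : R := ipmx x (F x).

End QBA.

(* Main.v *)
Require Import Defs.
From HB Require Import structures.
From mathcomp Require Import all_boot all_order all_algebra.
From mathcomp Require Import complex sesquilinear spectral.
From mathcomp Require Import boolp reals sequences exp.
From mathcomp Require Import ring lra.
Import Order.TTheory GRing.Theory Num.Theory.
Set Implicit Arguments. Unset Strict Implicit. Unset Printing Implicit Defensive.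
Local Open Scope ring_scope.
Local Open Scope complex_scope.
Local Open Scope sesquilinear_scope.


Section Basic.
Variable R : realType.
Local Notation C := R[i].
Local Notation Re := (@complex.Re R).
Local Notation Im := (@complex.Im R).

Definition sq (z : C) : R := Re z ^+ 2 + Im z ^+ 2.

Lemma sq_ge0 z : 0 <= sq z.
Proof. by rewrite /sq addr_ge0 // sqr_ge0. Qed.

Lemma mulJ_sq z : z * z^*%C = (sq z)%:C.
Proof. case: z => a b; rewrite /sq /=; apply/eqP; rewrite eq_complex /=; apply/andP; split; apply/eqP; ring. Qed.

Lemma Jmul_sq z : z^*%C * z = (sq z)%:C.
Proof. by rewrite mulrC mulJ_sq. Qed.

Lemma sq_eq0 z : (sq z == 0) = (z == 0).
Proof.
case: z => a b; rewrite /sq /= paddr_eq0 ?sqr_ge0 // !sqrf_eq0.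
by rewrite eq_complex.
Qed.

Lemma sqM a b : sq (a * b) = sq a * sq b.
Proof. case: a => a1 a2; case: b => b1 b2; rewrite /sq /=; ring. Qed.

Lemma ReC (x : R) : Re x%:C = x. Proof. by []. Qed.
Lemma ImC (x : R) : Im x%:C = 0. Proof. by []. Qed.

Lemma ReM_real (x : R) z : Re (x%:C * z) = x * Re z.
Proof. case: z => a b /=; ring. Qed.

Definition nm (z : C) : R := Num.sqrt (sq z).

Lemma nm_ge0 z : 0 <= nm z. Proof. exact: sqrtr_ge0. Qed.

Lemma nmM a b : nm (a * b) = nm a * nm b.
Proof. by rewrite /nm sqM sqrtrM // sq_ge0. Qed.

Lemma Re_le_nm z : `|Re z| <= nm z.
Proof.
rewrite /nm -sqrtr_sqr ler_sqrt ?sq_ge0 // /sq lerDl sqr_ge0 //.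
Qed.

Lemma nm_sq z : nm z ^+ 2 = sq z.
Proof. by rewrite /nm sqr_sqrtr // sq_ge0. Qed.

Lemma nmM_le_sq a b : nm a * nm b <= (sq a + sq b) / 2.
Proof.
rewrite -!nm_sq; have := sqr_ge0 (nm a - nm b).
have h := nm_ge0 a; have h' := nm_ge0 b.
move=> H; nra.
Qed.

End Basic.


Section Mx.
Variable R : realType.
Variable n : nat.
Local Notation C := R[i].
Local Notation Re := (@complex.Re R).
Local Notation Im := (@complex.Im R).
Local Notation M := 'M[C]_n.

Definition dgm (c : 'I_n -> R) : M := diag_mx (\row_i (c i)%:C).
Definition rep (U : M) (c : 'I_n -> R) : M := U^t* *m dgm c *m U.

Lemma unit_r (U : M) : U \is unitarymx -> U *m U^t* = 1%:M.
Proof. by move/unitarymxP. Qed.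

Lemma unit_l (U : M) : U \is unitarymx -> U^t* *m U = 1%:M.
Proof. by move=> uU; rewrite -invmx_unitary // mulVmx // unitarymx_unit. Qed.

Lemma unitC (U : M) : U \is unitarymx -> U^t* \is unitarymx.
Proof. by move=> uU; rewrite trmxC_unitary. Qed.

Lemma dgm_tC c : (dgm c)^t* = dgm c.
Proof.
apply/matrixP => i j; rewrite !mxE.
rewrite eq_sym; case: (i =P j) => [->|ne]; rewrite ?mulr1n ?mulr0n ?rmorph0 //.
exact: conjc_real.
Qed.

Lemma tC_mul (A B : M) : (A *m B)^t* = B^t* *m A^t*.
Proof. by rewrite trmx_mul map_mxM. Qed.

Lemma rep_tC U c : (rep U c)^t* = rep U c.
Proof. by rewrite /rep !tC_mul trmxCK dgm_tC mulmxA. Qed.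

Lemma rep_herm U c : rep U c \is hermsymmx.
Proof. by apply/is_hermitianmxP; rewrite expr0 scale1r rep_tC. Qed.

Lemma dgm_mul c d : dgm c *m dgm d = dgm (fun i => c i * d i).
Proof. by rewrite /dgm mulmx_diag; congr diag_mx; apply/rowP => i; rewrite !mxE rmorphM. Qed.

Lemma rep_mul U c d : U \is unitarymx -> rep U c *m rep U d = rep U (fun i => c i * d i).
Proof.
move=> uU. rewrite /rep. rewrite !mulmxA. rewrite -(mulmxA (U^t* *m dgm c) U (U^t* )). rewrite (unit_r uU). rewrite mulmx1.
by rewrite -(mulmxA (U^t*) (dgm c) (dgm d)) dgm_mul.
Qed.

Lemma dgm1 : dgm (fun _ => 1) = 1%:M.
Proof. by rewrite /dgm -diag_const_mx; congr diag_mx; apply/rowP => i; rewrite !mxE. Qed.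

Lemma rep1 U : U \is unitarymx -> rep U (fun _ => 1) = 1%:M.
Proof. by move=> uU; rewrite /rep dgm1 mulmx1 unit_l. Qed.

Lemma dgmD c d : dgm c + dgm d = dgm (fun i => c i + d i).
Proof.
apply/matrixP => i j; rewrite !mxE; case: (i =P j) => [->|ne]; rewrite ?mulr1n ?mulr0n ?addr0 //.
by rewrite rmorphD.
Qed.

Lemma dgmZ (a : R) c : a%:C *: dgm c = dgm (fun i => a * c i).
Proof.
apply/matrixP => i j; rewrite !mxE; case: (i =P j) => [->|ne]; rewrite ?mulr1n ?mulr0n ?mulr0 //.
by rewrite rmorphM.
Qed.

Lemma repD U c d : rep U c + rep U d = rep U (fun i => c i + d i).
Proof. by rewrite /rep -mulmxDl -mulmxDr dgmD. Qed.

Lemma repZ U (a : R) c : a%:C *: rep U c = rep U (fun i => a * c i).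
Proof. by rewrite /rep scalemxAl scalemxAr dgmZ. Qed.

Lemma tr_dgm c : \tr (dgm c) = (\sum_i c i)%:C.
Proof. by rewrite /dgm mxtrace_diag rmorph_sum; apply: eq_bigr => i _; rewrite mxE. Qed.

Lemma tr_rep U c : U \is unitarymx -> \tr (rep U c) = (\sum_i c i)%:C.
Proof. by move=> uU; rewrite /rep mxtrace_mulC mulmxA unit_r // mul1mx tr_dgm. Qed.


Lemma herm_rep (A : M) : A \is hermsymmx ->
  A = rep (spectralmx A) (fun i => Re (spectral_diag A 0 i)).
Proof.
move=> hA; have := hermitian_spectral_diag_real hA => /mxOverP rsp.
have /orthomx_spectralP {1}-> := hermitian_normalmx hA.
rewrite (invmx_unitary (spectral_unitarymx A)) /rep /dgm.
have e : spectral_diag A = \row_i (Re (spectral_diag A 0 i))%:C.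
  apply/rowP => i; rewrite mxE RRe_real; first by [].
  exact: rsp.
by rewrite {1}e.
Qed.

Lemma mxfunE f (A : M) :
  mxfun f A = rep (spectralmx A) (fun i => f (Re (spectral_diag A 0 i))).
Proof. by rewrite /mxfun (invmx_unitary (spectral_unitarymx A)). Qed.


Lemma dcomm_entry (W : M) c d : dgm c *m W = W *m dgm d ->
  forall i j, W i j != 0 -> c i = d j.
Proof.
move=> h i j nz; move/matrixP/(_ i j): h; rewrite /dgm mul_diag_mx mul_mx_diag !mxE.
move=> E; have : (c i)%:C = (d j)%:C :> C by apply: (mulIf nz); rewrite E mulrC.
by case.
Qed.

Lemma entry_dcomm (W : M) c d : (forall i j, W i j != 0 -> c i = d j) ->
  dgm c *m W = W *m dgm d.
Proof.
move=> hij; apply/matrixP => i j; rewrite /dgm mul_diag_mx mul_mx_diag !mxE.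
have [->|nz] := eqVneq (W i j) 0; first by rewrite mulr0 mul0r.
by rewrite (hij _ _ nz) mulrC.
Qed.

Lemma rep_inter U V c d : U \is unitarymx -> V \is unitarymx ->
  rep U c = rep V d -> forall i j, (U *m V^t*) i j != 0 -> c i = d j.
Proof.
move=> uU uV e; apply: dcomm_entry.
have := congr1 (fun X => U *m X *m V^t*) e; rewrite /rep /=.
rewrite !mulmxA (unit_r uU) mul1mx => ->.
rewrite -(mulmxA (U *m V^t* *m dgm d)) (unit_r uV) mulmx1.
by rewrite -(mulmxA U).
Qed.

Lemma inter_rep U V c d : U \is unitarymx -> V \is unitarymx ->
  (forall i j, (U *m V^t*) i j != 0 -> c i = d j) -> rep U c = rep V d.
Proof.
move=> uU uV /entry_dcomm h.
have eU : U = (U *m V^t*) *m V by rewrite -mulmxA (unit_l uV) mulmx1.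
rewrite /rep {2}eU mulmxA -(mulmxA (U^t*) (dgm c)) h.
rewrite (mulmxA (U^t*) (U *m V^t*)) (mulmxA (U^t*) U) (unit_l uU) mul1mx.
by [].
Qed.

Lemma rep_unique f U V c d : U \is unitarymx -> V \is unitarymx ->
  rep U c = rep V d -> rep U (fun i => f (c i)) = rep V (fun i => f (d i)).
Proof.
move=> uU uV e; apply: inter_rep => // i j nz.
by rewrite (rep_inter uU uV e nz).
Qed.

Lemma mxfun_rep f (A : M) U c : U \is unitarymx -> A = rep U c ->
  mxfun f A = rep U (fun i => f (c i)).
Proof.
move=> uU eA; rewrite mxfunE; apply: rep_unique => //; first exact: spectral_unitarymx.
rewrite -herm_rep; first exact: eA.
by rewrite eA rep_herm.
Qed.

End Mx.


Section Tr.
Variable R : realType.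
Variable n : nat.
Local Notation C := R[i].
Local Notation Re := (@complex.Re R).
Local Notation Im := (@complex.Im R).
Local Notation M := 'M[C]_n.

Lemma tCE (A : M) i j : (A^t*) i j = (A j i)^*%C.
Proof. by rewrite !mxE. Qed.

Lemma tr_dWdW (W : M) c d :
  \tr (dgm c *m W *m dgm d *m W^t*) = (\sum_i \sum_j c i * d j * sq (W i j))%:C.
Proof.
rewrite /dgm mul_diag_mx mul_mx_diag /mxtrace rmorph_sum; apply: eq_bigr => i _.
rewrite !mxE rmorph_sum; apply: eq_bigr => j _; rewrite !mxE.
have -> : (c i)%:C * W i j * (d j)%:C * (W i j)^*%C = (c i)%:C * (d j)%:C * (W i j * (W i j)^*%C) by ring.
by rewrite mulJ_sq !rmorphM.
Qed.

Lemma unit_rows (W : M) : W \is unitarymx -> forall i, \sum_j sq (W i j) = 1.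
Proof.
move=> /unit_r h i; move/matrixP/(_ i i): h; rewrite !mxE eqxx mulr1n.
rewrite (eq_bigr (fun j => (sq (W i j))%:C)); last by move=> j _; rewrite !mxE mulJ_sq.
by rewrite -rmorph_sum => -[].
Qed.

Lemma unit_cols (W : M) : W \is unitarymx -> forall j, \sum_i sq (W i j) = 1.
Proof.
move=> /unit_l h j; move/matrixP/(_ j j): h; rewrite !mxE eqxx mulr1n.
under eq_bigr => i _ do rewrite tCE Jmul_sq.
by rewrite -rmorph_sum => -[].
Qed.

Lemma tr_rep2 (U V : M) (c d : 'I_n -> R) : U \is unitarymx -> V \is unitarymx ->
  \tr (rep U c *m rep V d) =
  (\sum_i \sum_j c i * d j * sq ((U *m V^t*) i j))%:C.
Proof.
move=> uU uV; rewrite -(tr_dWdW (U *m V^t*)).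
have -> : \tr (rep U c *m rep V d) = \tr ((dgm c *m U *m V^t* *m dgm d *m V) *m U^t*).
  by rewrite (mxtrace_mulC (dgm c *m U *m V^t* *m dgm d *m V) (U^t*)) /rep !mulmxA.
by rewrite tC_mul trmxCK !mulmxA.
Qed.


Lemma ltC0 (x : R) : (0 < x%:C) = (0 < x).
Proof. by rewrite ltcE /= eqxx. Qed.

Lemma leC0 (x : R) : (0 <= x%:C) = (0 <= x).
Proof. by rewrite lecE /= eqxx. Qed.

Lemma tC_mulv (U : M) (v : 'cV[C]_n) : (U *m v)^t* = v^t* *m U^t*.
Proof. by rewrite trmx_mul map_mxM. Qed.

Lemma qform_d (u : 'cV[C]_n) c :
  (u^t* *m dgm c *m u) 0 0 = (\sum_i c i * sq (u i 0))%:C.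
Proof.
rewrite /dgm mul_mx_diag !mxE rmorph_sum; apply: eq_bigr => i _.
rewrite !mxE mulrAC Jmul_sq mulrC.
by rewrite -rmorphM.
Qed.

Lemma norm2E (u : 'cV[C]_n) : (u^t* *m u) 0 0 = (\sum_i sq (u i 0))%:C.
Proof.
rewrite !mxE rmorph_sum; apply: eq_bigr => i _.
by rewrite !mxE Jmul_sq.
Qed.

Lemma qform_rep (U : M) (c : 'I_n -> R) (v : 'cV[C]_n) :
  qform (rep U c) v = (\sum_i c i * sq ((U *m v) i 0))%:C.
Proof.
rewrite /qform /rep -qform_d tC_mulv !mulmxA.
by [].
Qed.

Lemma unit_vec (U : M) (v : 'cV[C]_n) : U \is unitarymx -> (U *m v == 0) = (v == 0).
Proof.
move=> uU; apply/eqP/eqP => [h|->]; last by rewrite mulmx0.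
by rewrite -[v]mul1mx -(unit_l uU) -mulmxA h mulmx0.
Qed.

Lemma pd_rep (U : M) (c : 'I_n -> R) : U \is unitarymx -> (forall i, 0 < c i) -> pdmx (rep U c).
Proof.
move=> uU cp; split; first exact: rep_herm.
move=> v v0; rewrite qform_rep ltC0.
have : U *m v != 0 by rewrite unit_vec.
case/eqP/matrixP/boolp.existsNP => i /boolp.existsNP [j].
rewrite [j]ord1 => /eqP; rewrite [X in _ != X]mxE => nz.
rewrite (bigD1 i) //=.
have h1 : 0 < c i * sq ((U *m v) i 0) by rewrite mulr_gt0 // lt_def sq_ge0 sq_eq0 nz.
have h2 : 0 <= \sum_(k | k != i) c k * sq ((U *m v) k 0).
  by apply: sumr_ge0 => k _; apply: mulr_ge0; [exact: ltW | exact: sq_ge0].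
lra.
Qed.

Lemma psd_rep (U : M) (c : 'I_n -> R) : U \is unitarymx -> (forall i, 0 <= c i) -> psdmx (rep U c).
Proof.
move=> uU cp; split; first exact: rep_herm.
move=> v; rewrite qform_rep leC0 sumr_ge0 // => k _.
by apply: mulr_ge0; [exact: cp | exact: sq_ge0].
Qed.

Lemma qform_delta (U : M) (c : 'I_n -> R) i : U \is unitarymx ->
  qform (rep U c) (U^t* *m delta_mx i 0) = (c i)%:C.
Proof.
move=> uU; rewrite qform_rep mulmxA (unit_r uU) mul1mx.
rewrite (bigD1 i) // big1 => [|k ki]; last first.
  by rewrite mxE (negbTE ki) /= /sq /= expr0n /= addr0 mulr0.
rewrite mxE !eqxx /sq /=; congr (_%:C); ring.
Qed.

Lemma delta_nz (U : M) (i : 'I_n) : U \is unitarymx -> U^t* *m (delta_mx i 0 : 'cV[C]_n) != 0.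
Proof.
move=> uU; rewrite -(unit_vec _ uU) mulmxA (unit_r uU) mul1mx.
apply/eqP => /matrixP/(_ i 0); rewrite !mxE !eqxx /=.
by move/eqP; rewrite oner_eq0.
Qed.

Lemma rep_pd_pos (U : M) (c : 'I_n -> R) : U \is unitarymx -> pdmx (rep U c) -> forall i, 0 < c i.
Proof.
move=> uU [_ h] i; have := h _ (delta_nz i uU).
by rewrite qform_delta // ltC0.
Qed.

Lemma rep_psd_pos (U : M) (c : 'I_n -> R) : U \is unitarymx -> psdmx (rep U c) -> forall i, 0 <= c i.
Proof.
move=> uU [_ h] i; have := h (U^t* *m delta_mx i 0).
by rewrite qform_delta // leC0.
Qed.

End Tr.


Section Scalar.
Variable R : realType.

Lemma ln_le (y : R) : 0 < y -> ln y <= y - 1.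
Proof.
move=> y0; have := expR_ge1Dx (ln y); rewrite lnK //; lra.
Qed.

Lemma ln_lt (y : R) : 0 < y -> y != 1 -> ln y < y - 1.
Proof.
move=> y0 y1; have : ln y != 0 by rewrite ln_eq0.
move/expR_gt1Dx; rewrite lnK //; lra.
Qed.

Definition gk (p q : R) := p * ln p - p * ln q - p + q.

Lemma gk_ge0 p q : 0 <= p -> 0 < q -> 0 <= gk p q.
Proof.
rewrite /gk le_eqVlt => /orP[/eqP <-|p0] q0; first by rewrite !mul0r; lra.
have r0 : 0 < q / p by rewrite divr_gt0.
have := ln_le r0; rewrite ln_div ?posrE //.
have -> : p * ln p - p * ln q - p + q = p * (q / p - 1 - (ln q - ln p)).
  by field; rewrite gt_eqF.
move=> h; apply: mulr_ge0; first exact: ltW.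
move: h; set r := q / p; lra.
Qed.

Lemma gk_eq0 p q : 0 <= p -> 0 < q -> gk p q = 0 -> p = q.
Proof.
rewrite /gk le_eqVlt => /orP[/eqP <-|p0] q0; first by rewrite !mul0r; lra.
have r0 : 0 < q / p by rewrite divr_gt0.
have [r1|r1] := eqVneq (q / p) 1.
  move=> _.
  by rewrite -[q](divfK (lt0r_neq0 p0)) r1 mul1r.
have := ln_lt r0 r1; rewrite ln_div ?posrE //.
have -> : p * ln p - p * ln q - p + q = p * (q / p - 1 - (ln q - ln p)).
  by field; rewrite gt_eqF.
move=> h /eqP; rewrite mulf_eq0 gt_eqF //= => /eqP.
move: h; set r := q / p; lra.
Qed.

End Scalar.

Section Klein.
Variable R : realType.
Variable n : nat.
Local Notation C := R[i].
Local Notation Re := (@complex.Re R).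
Local Notation M := 'M[C]_n.

Lemma relent_rep (A B : M) U V p q : U \is unitarymx -> V \is unitarymx ->
  A = rep U p -> B = rep V q ->
  relent A B = \sum_i p i * ln (p i) -
     \sum_i \sum_j p i * ln (q j) * sq ((U *m V^t*) i j).
Proof.
move=> uU uV eA eB; rewrite /relent /neg_entropy /logm.
rewrite (mxfun_rep _ uU eA) (mxfun_rep _ uV eB) eA (tr_rep2 _ _ uU uV) (tr_rep _ uU) !ReC.
by [].
Qed.

Lemma dens_spec (A : M) : density A ->
  [/\ spectralmx A \is unitarymx, A = rep (spectralmx A) (fun i => Re (spectral_diag A 0 i)),
      forall i, 0 <= Re (spectral_diag A 0 i) & \sum_i Re (spectral_diag A 0 i) = 1].
Proof.
move=> [[hA psdA] trA]; have uU := spectral_unitarymx A.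
have eA := herm_rep hA; split => //.
  by apply: rep_psd_pos uU _; rewrite -eA.
by move: trA; rewrite {1}eA (tr_rep _ uU) => -[].
Qed.

Lemma relint_spec (A : M) : relint_density A ->
  [/\ spectralmx A \is unitarymx, A = rep (spectralmx A) (fun i => Re (spectral_diag A 0 i)),
      forall i, 0 < Re (spectral_diag A 0 i) & \sum_i Re (spectral_diag A 0 i) = 1].
Proof.
move=> [[hA pdA] trA]; have uU := spectral_unitarymx A.
have eA := herm_rep hA; split => //.
  by apply: rep_pd_pos uU _; rewrite -eA.
by move: trA; rewrite {1}eA (tr_rep _ uU) => -[].
Qed.

Lemma klein (A B : M) : density A -> relint_density B ->
  0 <= relent A B /\ (relent A B <= 0 -> A = B).
Proof.
move=> /dens_spec [uU eA p0 p1] /relint_spec [uV eB q0 q1].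
set U := spectralmx A in uU eA *; set V := spectralmx B in uV eB *.
set p := (fun i => Re (spectral_diag A 0 i)) in eA p0 p1 *.
set q := (fun i => Re (spectral_diag B 0 i)) in eB q0 q1 *.
have uW : U *m V^t* \is unitarymx := mul_unitarymx uU (unitC uV).
set W := U *m V^t* in uW *.
have key : relent A B = \sum_i \sum_j sq (W i j) * gk (p i) (q j).
  rewrite (relent_rep uU uV eA eB).
  have inner i : \sum_j sq (W i j) * gk (p i) (q j) =
     p i * ln (p i) - \sum_j p i * ln (q j) * sq (W i j) - p i + \sum_j sq (W i j) * q j.
    have r := unit_rows uW i.
    transitivity (\sum_j (sq (W i j) * (p i * ln (p i)) - p i * ln (q j) * sq (W i j)
       - sq (W i j) * p i + sq (W i j) * q j)).
      by apply: eq_bigr => j _; rewrite /gk; ring.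
    rewrite big_split /= !sumrB.
    by rewrite -!mulr_suml r !mul1r.
  have p1' : \sum_i p i = 1 := p1.
  rewrite (eq_bigr _ (fun i _ => inner i)) big_split !sumrB /= p1'.
  have -> : \sum_i \sum_j sq (W i j) * q j = 1.
    rewrite exchange_big /= -q1; apply: eq_bigr => j _.
    by rewrite -mulr_suml (unit_cols uW) mul1r.
  ring.
have terms i j : 0 <= sq (W i j) * gk (p i) (q j) by apply: mulr_ge0; [exact: sq_ge0 | exact: gk_ge0 (p0 i) (q0 j)].
have sum_ge0 : 0 <= \sum_i \sum_j sq (W i j) * gk (p i) (q j).
  by apply: sumr_ge0 => i _; apply: sumr_ge0 => j _.
rewrite key; split => // hle.
have /eqP h0 : \sum_i \sum_j sq (W i j) * gk (p i) (q j) == 0 by rewrite eq_le hle sum_ge0.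
rewrite eA eB; apply: inter_rep => // i j nz.
move/eqP: h0; rewrite psumr_eq0 => [/allP /(_ i (mem_index_enum i)) /=|i' _]; last first.
  by apply: sumr_ge0 => j' _.
rewrite psumr_eq0 => [/allP /(_ j (mem_index_enum j)) /=|j' _ //].
rewrite mulf_eq0 sq_eq0 (negbTE nz) /= => /eqP; exact: gk_eq0 (p0 i) (q0 j).
Qed.

End Klein.


Section Ip.
Variable R : realType.
Variable n : nat.
Local Notation C := R[i].
Local Notation Re := (@complex.Re R).
Local Notation M := 'M[C]_n.

Lemma ipmxC (X Y : M) : ipmx X Y = ipmx Y X.
Proof. by rewrite /ipmx mxtrace_mulC. Qed.

Lemma ipmxDr (X Y Z : M) : ipmx X (Y + Z) = ipmx X Y + ipmx X Z.
Proof. by rewrite /ipmx mulmxDr mxtraceD raddfD. Qed.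

Lemma ipmxNr (X Y : M) : ipmx X (- Y) = - ipmx X Y.
Proof. by rewrite /ipmx mulmxN raddfN raddfN. Qed.

Lemma ipmxBr (X Y Z : M) : ipmx X (Y - Z) = ipmx X Y - ipmx X Z.
Proof. by rewrite ipmxDr ipmxNr. Qed.

Lemma ipmxZr (X Y : M) (a : R) : ipmx X (a%:C *: Y) = a * ipmx X Y.
Proof. by rewrite /ipmx -scalemxAr mxtraceZ ReM_real. Qed.

Lemma ipmxDl (X Y Z : M) : ipmx (Y + Z) X = ipmx Y X + ipmx Z X.
Proof. by rewrite ipmxC ipmxDr !(ipmxC X). Qed.

Lemma ipmxBl (X Y Z : M) : ipmx (Y - Z) X = ipmx Y X - ipmx Z X.
Proof. by rewrite ipmxC ipmxBr !(ipmxC X). Qed.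

Lemma ipmxZl (X Y : M) (a : R) : ipmx (a%:C *: Y) X = a * ipmx Y X.
Proof. by rewrite ipmxC ipmxZr ipmxC. Qed.

Lemma ipmx1 (X : M) : ipmx X 1%:M = Re (\tr X).
Proof. by rewrite /ipmx mulmx1. Qed.

Lemma negS_ip (A : M) : A \is hermsymmx -> neg_entropy A = ipmx A (logm A).
Proof.
move=> hA; have uU := spectral_unitarymx A; have eA := herm_rep hA.
set P := spectralmx A in uU eA; set p := (fun i => _) in eA.
rewrite /neg_entropy /logm /ipmx (mxfun_rep _ uU eA) (mxfun_rep _ uU eA).
by rewrite [X in X *m _]eA (rep_mul _ _ uU).
Qed.

Lemma relent_self (A : M) : A \is hermsymmx -> relent A A = 0.
Proof. by move=> hA; rewrite /relent (negS_ip hA) /ipmx subrr. Qed.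

Lemma hermP (A : M) : reflect (forall i j, A i j = (A j i)^*%C) (A \is hermsymmx).
Proof.
rewrite is_hermitianmxE expr0 scale1r; apply: (iffP eqP) => [e i j|h].
  by rewrite {1}e tCE; reflexivity.
change (A = (A ^t*) :> 'M[C]_n).
by apply/matrixP => i j; rewrite tCE; exact: h.
Qed.

Lemma conj_lin (a b : R) (x y : C) : (a%:C * x + b%:C * y)^*%C = a%:C * x^*%C + b%:C * y^*%C.
Proof.
case: x => x1 x2; case: y => y1 y2; apply/eqP; rewrite eq_complex /=.
by apply/andP; split; apply/eqP; ring.
Qed.

Lemma herm_lin (A B : M) (a b : R) : A \is hermsymmx -> B \is hermsymmx ->
  a%:C *: A + b%:C *: B \is hermsymmx.
Proof.
move=> /hermP hA /hermP hB; apply/hermP => i j.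
by rewrite !mxE conj_lin -hA -hB.
Qed.

Lemma herm_sub (A B : M) (b : R) : A \is hermsymmx -> B \is hermsymmx ->
  A - b%:C *: B \is hermsymmx.
Proof.
move=> hA hB; have := herm_lin 1 (- b) hA hB.
by rewrite scale1r rmorphN scaleNr.
Qed.

Lemma qform_lin (A B : M) (a b : C) v : qform (a *: A + b *: B) v = a * qform A v + b * qform B v.
Proof.
by rewrite /qform mulmxDr mulmxDl -!scalemxAr -!scalemxAl !mxE.
Qed.

Lemma qformB (A B : M) v : qform (A - B) v = qform A v - qform B v.
Proof.
have := qform_lin A B 1 (-1) v; rewrite !scaleN1r scale1r mul1r mulN1r.
by [].
Qed.

Lemma density_comb (x y : M) (t : R) : density x -> density y -> 0 <= t <= 1 ->
  density (t%:C *: x + (1 - t)%:C *: y).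
Proof.
move=> [[hx px] tx] [[hy py] ty] /andP[t0 t1]; split; first split.
- exact: herm_lin.
- move=> v; rewrite qform_lin addr_ge0 // mulr_ge0 // leC0; lra.
- by rewrite mxtraceD !mxtraceZ tx ty !mulr1 -rmorphD addrC subrK.
Qed.

Lemma relint_comb (x y : M) (t : R) : relint_density x -> relint_density y -> 0 <= t <= 1 ->
  relint_density (t%:C *: x + (1 - t)%:C *: y).
Proof.
move=> [[hx px] tx] [[hy py] ty] /andP[t0 t1]; split; first split.
- exact: herm_lin.
- move=> v v0; rewrite qform_lin.
  have qx := px v v0; have qy := py v v0.
  have [tz|tp] := eqVneq t 0.
    by rewrite tz mul0r add0r subr0 mul1r.
  have h1 : 0 < t%:C * qform x v by rewrite mulr_gt0 // ltC0 lt_def tp t0.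
  have h2 : 0 <= (1 - t)%:C * qform y v by apply: mulr_ge0; [rewrite leC0 subr_ge0 | exact: ltW].
  by apply: (lt_le_trans h1); rewrite lerDl.
- by rewrite mxtraceD !mxtraceZ tx ty !mulr1 -rmorphD addrC subrK.
Qed.

End Ip.


Section Norm.
Variable R : realType.
Variable n : nat.
Local Notation C := R[i].
Local Notation Re := (@complex.Re R).
Local Notation M := 'M[C]_n.

Definition sumsq (A : M) := \sum_i \sum_j sq (A i j).

Lemma sumsq_ge0 (A : M) : 0 <= sumsq A.
Proof. by apply: sumr_ge0 => i _; apply: sumr_ge0 => j _; exact: sq_ge0. Qed.

Lemma mxnormE (A : M) : mxnorm A = Num.sqrt (sumsq A).
Proof.
rewrite /mxnorm /adjmx /mxtrace /sumsq raddf_sum; congr Num.sqrt; apply: eq_bigr => i _.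
rewrite !mxE raddf_sum; apply: eq_bigr => j _; rewrite tCE mulJ_sq.
by [].
Qed.

Lemma mxnorm_ge0 (A : M) : 0 <= mxnorm A.
Proof. by rewrite mxnormE sqrtr_ge0. Qed.

Lemma le_sum_nneg (F : 'I_n -> R) k : (forall i, 0 <= F i) -> F k <= \sum_i F i.
Proof.
move=> h; rewrite (bigD1 k) //= lerDl; apply: sumr_ge0 => i _; exact: h.
Qed.

Lemma nm_le_mxnorm (A : M) i j : nm (A i j) <= mxnorm A.
Proof.
rewrite mxnormE /nm ler_sqrt; last exact: sumsq_ge0.
rewrite /sumsq (bigD1 i) //= (bigD1 j) //= -addrA lerDl.
apply: addr_ge0; apply: sumr_ge0 => k _; first exact: sq_ge0.
by apply: sumr_ge0 => l _; exact: sq_ge0.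
Qed.

Lemma sqZ (a : R) (z : C) : sq (a%:C * z) = a ^+ 2 * sq z.
Proof. by rewrite sqM /sq /= expr0n /= addr0. Qed.

Lemma mxnormZ (A : M) (a : R) : mxnorm (a%:C *: A) = `|a| * mxnorm A.
Proof.
rewrite !mxnormE /sumsq.
rewrite (eq_bigr (fun i => a ^+ 2 * \sum_j sq (A i j))); last first.
  by move=> i _; rewrite mulr_sumr; apply: eq_bigr => j _; rewrite mxE sqZ.
by rewrite -mulr_sumr sqrtrM ?sqr_ge0 // sqrtr_sqr.
Qed.

Lemma sq_conj (z : C) : sq (z^*%C) = sq z.
Proof. by case: z => a b; rewrite /sq /=; ring. Qed.

Lemma nm_conj (z : C) : nm (z^*%C) = nm z.
Proof. by rewrite /nm sq_conj. Qed.

Lemma sum_const_n (c : R) : \sum_(i < n) c = n%:R * c.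
Proof. by rewrite sumr_const card_ord mulr_natl. Qed.

Lemma ip_bound (X Y : M) : `|ipmx X Y| <= n%:R * n%:R * (mxnorm X * mxnorm Y).
Proof.
rewrite /ipmx /mxtrace raddf_sum.
apply: (le_trans (ler_norm_sum _ _ _)).
apply: le_trans (_ : \sum_(i < n) (n%:R * (mxnorm X * mxnorm Y)) <= _); last first.
  by rewrite sum_const_n mulrA.
apply: ler_sum => i _; rewrite mxE raddf_sum.
apply: (le_trans (ler_norm_sum _ _ _)).
rewrite -sum_const_n; apply: ler_sum => j _.
apply: (le_trans (Re_le_nm _)); rewrite nmM.
by apply: ler_pM; rewrite ?nm_ge0 ?nm_le_mxnorm.
Qed.

Lemma dsum (a : 'I_n -> R) : \sum_k \sum_j (a j + a k) = 2 * n%:R * \sum_i a i.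
Proof.
rewrite (eq_bigr (fun k => \sum_i a i + n%:R * a k)); last first.
  by move=> k _; rewrite big_split /= sum_const_n.
rewrite big_split /= sum_const_n -mulr_sumr; ring.
Qed.

Lemma qform_bound (E : M) (v : 'cV[C]_n) :
  `|Re (qform E v)| <= n%:R * mxnorm E * \sum_i sq (v i 0).
Proof.
rewrite /qform mxE raddf_sum.
apply: (le_trans (ler_norm_sum _ _ _)).
apply: le_trans (_ : \sum_k \sum_j (mxnorm E * ((sq (v j 0) + sq (v k 0)) / 2)) <= _); last first.
  rewrite (eq_bigr (fun k => mxnorm E / 2 * \sum_j (sq (v j 0) + sq (v k 0)))); last first.
    by move=> k _; rewrite mulr_sumr; apply: eq_bigr => j _; rewrite mulrA mulrAC.
  by rewrite -mulr_sumr dsum le_eqVlt; apply/orP; left; apply/eqP; field.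
apply: ler_sum => k _; rewrite mxE mulr_suml raddf_sum.
apply: (le_trans (ler_norm_sum _ _ _)).
apply: ler_sum => j _; rewrite mxE.
apply: (le_trans (Re_le_nm _)); rewrite !nmM nm_conj.
have h1 := nm_le_mxnorm E j k; have h2 := nmM_le_sq (v j 0) (v k 0).
have h3 := nm_ge0 (v j 0); have h4 := nm_ge0 (v k 0); have h5 := nm_ge0 (E j k).
have h6 := mxnorm_ge0 E.
rewrite [v^T 0 j]mxE.
apply: le_trans (_ : mxnorm E * (nm (v j 0) * nm (v k 0)) <= _).
  rewrite mulrAC (mulrC (nm (v j 0) * nm (v k 0))); apply: ler_pM => //; exact: mulr_ge0.
exact: ler_wpM2l.
Qed.

End Norm.


Section Open.
Variable R : realType.
Variable n : nat.
Local Notation C := R[i].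
Local Notation Re := (@complex.Re R).
Local Notation M := 'M[C]_n.

Lemma min_pos (c : 'I_n -> R) : (forall i, 0 < c i) ->
  exists2 m, 0 < m & forall i, m <= c i.
Proof.
move=> cp; exists (\big[Order.min/1]_i c i).
  by apply: lt_bigmin => //; exact: ltr01.
by move=> i; exact: bigmin_le.
Qed.

Lemma unit_norm_vec (U : M) (v : 'cV[C]_n) : U \is unitarymx ->
  \sum_k sq ((U *m v) k 0) = \sum_k sq (v k 0).
Proof.
move=> uU; have := norm2E (U *m v); rewrite tC_mulv mulmxA.
rewrite -(mulmxA (v^t*)) (unit_l uU) mulmx1 norm2E.
by case.
Qed.

Lemma delta_norm (V : M) i : V \is unitarymx ->
  \sum_k sq ((V^t* *m (delta_mx i 0 : 'cV[C]_n)) k 0) = 1.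
Proof.
move=> uV; rewrite -(unit_norm_vec _ uV) mulmxA (unit_r uV) mul1mx.
rewrite (bigD1 i) // big1 => [|k ki]; last first.
  by rewrite mxE (negbTE ki) /= /sq /= expr0n /= addr0.
by rewrite mxE !eqxx /sq /=; ring.
Qed.

Lemma pd_open (x : M) : relint_density x ->
  exists2 d, 0 < d & forall y, density y -> mxnorm (y - x) < d -> relint_density y.
Proof.
move=> /relint_spec [uU eX cpos _].
set U := spectralmx x in uU eX; set c := (fun i => _) in eX cpos.
have [m m0 mle] := min_pos cpos.
have hn : 0 <= n%:R :> R by rewrite ler0n.
have n1 : 0 < n%:R + 1 :> R by lra.
exists (m / (n%:R + 1)); first by rewrite divr_gt0.
move=> y dy hd; have [[hy _] ty] := dy.
have /dens_spec [uV eY e0 _] := dy.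
set V := spectralmx y in uV eY; set e := (fun i => _) in eY e0.
split => //; rewrite eY; apply: (pd_rep uV) => i.
set v := V^t* *m (delta_mx i 0 : 'cV[C]_n).
have q1 : qform y v = (e i)%:C by rewrite {1}eY /v (qform_delta _ _ uV).
have q2 : qform y v = qform x v + qform (y - x) v by rewrite qformB addrC subrK.
have q3 : m <= Re (qform x v).
  rewrite eX qform_rep ReC.
  apply: le_trans (_ : \sum_k m * sq ((U *m v) k 0) <= _).
    by rewrite -mulr_sumr (unit_norm_vec _ uU) (delta_norm i uV) mulr1.
  by apply: ler_sum => k _; apply: ler_wpM2r; [exact: sq_ge0 | exact: mle].
have q4 := qform_bound (y - x) v; rewrite (delta_norm i uV) mulr1 in q4.
have hd' : mxnorm (y - x) * (n%:R + 1) < m by rewrite -ltr_pdivlMr.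
have h0 := mxnorm_ge0 (y - x).
move: q4; rewrite ler_norml => /andP[q4 _].
have : e i = Re (qform x v) + Re (qform (y - x) v) by rewrite -raddfD -q2 q1.
set a := Re (qform x v); set b := Re (qform (y - x) v); set N := mxnorm (y - x).
move=> ee; rewrite ee; nra.
Qed.

End Open.


Section Grad.
Variable R : realType.
Variable n : nat.
Local Notation C := R[i].
Local Notation Re := (@complex.Re R).
Local Notation M := 'M[C]_n.

Lemma qform0 (A : M) : qform A 0 = 0.
Proof. by rewrite /qform mulmx0 mxE. Qed.

Lemma relint_dens (x : M) : relint_density x -> density x.
Proof.
move=> [[hx px] tx]; split => //; split => // v.
have [->|v0] := eqVneq v 0; first by rewrite qform0.
exact: ltW (px v v0).
Qed.

Lemma grad_arith (P Q N G e nn : R) : 0 <= nn -> 0 < e -> 0 <= N -> 0 <= G ->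
  G * (nn + 1) < e -> P <= nn * (N * G) -> 0 <= P - Q -> 0 <= Q -> `|P - Q| <= e * N.
Proof.
move=> hnn e0 N0 G0 k0 b2 a1 a2.
have k1' : G * (nn + 1) = nn * G + G by ring.
have k1 : nn * G <= e by lra.
have k2 : N * (nn * G) <= N * e := ler_wpM2l N0 k1.
have k3 : nn * (N * G) = N * (nn * G) by ring.
have k4 : 0 <= e * N := mulr_ge0 (ltW e0) N0.
have k5 : N * e = e * N by rewrite mulrC.
rewrite ler_norml; apply/andP; split; lra.
Qed.

Lemma uniq_arith (a t p1 p2 e K : R) : 0 < t ->
  `|a - t * p1| <= e * (t * K) -> `|a - t * p2| <= e * (t * K) ->
  `|p1 - p2| <= 2 * e * K.
Proof.
move=> t0 h1 h2.
have : `|t * p1 - t * p2| <= e * (t * K) + e * (t * K).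
  have -> : t * p1 - t * p2 = (a - t * p2) - (a - t * p1) by ring.
  exact: le_trans (ler_normB _ _) (lerD h2 h1).
rewrite -mulrBr normrM gtr0_norm //.
have -> : e * (t * K) + e * (t * K) = t * (2 * e * K) by ring.
by rewrite ler_pM2l.
Qed.

Lemma grad_F (F : M -> M) (gamma : R) (x : M) :
  continuous_on_density F ->
  (forall x y : M, relint_density x -> relint_density y ->
     0 <= ipmx x (F x - F y) <= gamma * relent x y) ->
  relint_density x -> is_gradient_at (fobj F) x (F x).
Proof.
move=> hc hF rx e e0.
have [d1 d10 hd1] := pd_open rx.
have dx := relint_dens rx.
set nn : R := n%:R * n%:R.
have hnn : 0 <= nn by rewrite mulr_ge0 // ler0n.
have nn1 : 0 < nn + 1 by lra.
have [d2 d20 hd2] := hc x dx (e / (nn + 1)) (divr_gt0 e0 nn1).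
exists (Num.min d1 d2); first by rewrite lt_min d10 d20.
move=> y dy; rewrite lt_min => /andP[h1 h2].
have ry := hd1 y dy h1.
have Fb := hd2 y dy h2.
have eq1 : fobj F y - fobj F x - ipmx (F x) (y - x) =
    ipmx (y - x) (F y - F x) - ipmx x (F x - F y).
  rewrite /fobj !ipmxBr !ipmxBl ?ipmxBr (ipmxC (F x) y) (ipmxC (F x) x); ring.
have eq2 : ipmx y (F y - F x) = ipmx (y - x) (F y - F x) - ipmx x (F x - F y).
  rewrite !ipmxBr !ipmxBl ?ipmxBr; ring.
have /andP[a1 _] := hF y x ry rx.
have /andP[a2 _] := hF x y rx ry.
have b := ip_bound (y - x) (F y - F x).
rewrite eq1; rewrite eq2 in a1.
move: b Fb a1 a2.
set P := ipmx (y - x) (F y - F x); set Q := ipmx x (F x - F y).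
set N := mxnorm (y - x); set G := mxnorm (F y - F x).
have N0 : 0 <= N := mxnorm_ge0 _.
have G0 : 0 <= G := mxnorm_ge0 _.
rewrite -/nn ler_norml => /andP[b1 b2] Fb a1 a2.
have k0 : G * (nn + 1) < e by rewrite -ltr_pdivlMr.
exact: grad_arith hnn e0 N0 G0 k0 b2 a1 a2.
Qed.

Lemma grad_unique (f : M -> R) (x G1 G2 : M) : density x ->
  is_gradient_at f x G1 -> is_gradient_at f x G2 ->
  forall z, density z -> ipmx G1 (z - x) = ipmx G2 (z - x).
Proof.
move=> dx g1 g2 z dz.
set K := mxnorm (z - x); have K0 : 0 <= K := mxnorm_ge0 _.
set L := ipmx G1 (z - x) - ipmx G2 (z - x).
suff hL : forall e, 0 < e -> `|L| <= 2 * e * K.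
  apply/eqP; rewrite -subr_eq0 -/L -normr_eq0.
  apply/eqP/le_anti; rewrite normr_ge0 andbT.
  apply/ler_addgt0Pr => e e0; rewrite add0r.
  have K1 : 0 < 2 * K + 1 by lra.
  have e'0 : 0 < e / (2 * K + 1) := divr_gt0 e0 K1.
  have ee : e / (2 * K + 1) * (2 * K + 1) = e by rewrite divfK // gt_eqF.
  apply: le_trans (hL _ e'0) _; move: ee e'0; set e' := e / _; nra.
move=> e e0.
have [d1 d10 h1] := g1 e e0; have [d2 d20 h2] := g2 e e0.
set dd := Num.min d1 d2; have dd0 : 0 < dd by rewrite lt_min d10 d20.
have K1 : 0 < K + 1 by lra.
set t := Num.min 1 (dd / (K + 1)).
have t0 : 0 < t by rewrite lt_min ltr01 divr_gt0.
have t1 : t <= 1 by rewrite ge_min lexx.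
have t2 : t <= dd / (K + 1) by rewrite ge_min lexx orbT.
have tK : t * K < dd.
  have : t * (K + 1) <= dd by rewrite -ler_pdivlMr.
  nra.
set y := t%:C *: z + (1 - t)%:C *: x.
have dy : density y by apply: density_comb => //; rewrite ltW.
have ey : y - x = t%:C *: (z - x).
  by rewrite /y rmorphB /= scalerBl scale1r scalerBr addrA addrAC addrK.
have ny : mxnorm (y - x) = t * K by rewrite ey mxnormZ ger0_norm // ltW.
have hy1 : mxnorm (y - x) < d1 by rewrite ny; apply: (lt_le_trans tK); rewrite ge_min lexx.
have hy2 : mxnorm (y - x) < d2 by rewrite ny; apply: (lt_le_trans tK); rewrite ge_min lexx orbT.
have := h1 y dy hy1; have := h2 y dy hy2.
rewrite ny ey !ipmxZr => k2 k1.
exact: uniq_arith t0 k1 k2.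
Qed.

End Grad.


Section QBA.
Variable R : realType.
Variable n : nat.
Local Notation C := R[i].
Local Notation Re := (@complex.Re R).
Local Notation M := 'M[C]_n.

Lemma n_pos (x : M) : \tr x = 1 -> (0 < n)%N.
Proof.
move=> tx; rewrite lt0n; apply/eqP => n0; move: tx.
rewrite /mxtrace big1 => [/esym/eqP|i _]; first by rewrite oner_eq0.
exfalso; move: (ltn_ord i); move: (nat_of_ord i) => k; by rewrite n0.
Qed.

Lemma repB (U : M) c d : rep U c - rep U d = rep U (fun i => c i - d i).
Proof.
have e : (-1 : C) = (-1 : R)%:C by rewrite rmorphN rmorph1.
rewrite -scaleN1r e repZ repD; congr rep; apply: boolp.funext => i; ring.
Qed.

Lemma logm_herm (x : M) : logm x \is hermsymmx.
Proof. by rewrite /logm mxfunE rep_herm. Qed.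

Lemma qba_props (F : M -> M) (gamma : R) (xk : M) :
  relint_density xk -> F xk \is hermsymmx ->
  relint_density (qba_step F gamma xk) /\
  exists s : R, logm xk = logm (qba_step F gamma xk) + s%:C *: 1%:M + (gamma^-1)%:C *: F xk.
Proof.
move=> rxk hF.
have n0 := n_pos rxk.2.
set H := logm xk - (gamma^-1)%:C *: F xk.
have hH : H \is hermsymmx by apply: herm_sub => //; exact: logm_herm.
have uP := spectral_unitarymx H; have eH := herm_rep hH.
set P := spectralmx H in uP eH; set h := (fun i => _) in eH.
set S := \sum_i expR (h i).
have S0 : 0 < S.
  rewrite /S (bigD1 (Ordinal n0)) //=.
  have := expR_gt0 (h (Ordinal n0)).
  have : 0 <= \sum_(i | i != Ordinal n0) expR (h i) by apply: sumr_ge0 => i _; exact: expR_ge0.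
  lra.
set q := fun i => S^-1 * expR (h i).
have ex1 : qba_step F gamma xk = rep P q.
  rewrite /qba_step /expm -/H mxfunE -/P (tr_rep _ uP) -/S.
  by rewrite -fmorphV repZ.
have q0 : forall i, 0 < q i by move=> i; rewrite /q mulr_gt0 ?invr_gt0 ?expR_gt0.
have q1 : \sum_i q i = 1 by rewrite /q -mulr_sumr mulVf // gt_eqF.
split.
  rewrite ex1; split; first exact: pd_rep.
  by rewrite (tr_rep _ uP) q1.
exists (ln S).
have el : logm (qba_step F gamma xk) = H - (ln S)%:C *: 1%:M.
  rewrite /logm (mxfun_rep _ uP ex1) eH -(rep1 uP) repZ.
  rewrite repB; congr rep; apply: boolp.funext => i.
  rewrite /q lnM ?posrE ?invr_gt0 ?expR_gt0 // lnV ?posrE // expRK; ring.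
by rewrite el /H !subrK.
Qed.

End QBA.


Section MD.
Variable R : realType.
Variable n : nat.
Local Notation C := R[i].
Local Notation Re := (@complex.Re R).
Local Notation M := 'M[C]_n.

Lemma md_step (F : M -> M) (gamma : R) (xk : M) :
  0 < gamma -> continuous_on_density F ->
  (forall x y : M, relint_density x -> relint_density y ->
     0 <= ipmx x (F x - F y) <= gamma * relent x y) ->
  F xk \is hermsymmx -> relint_density xk ->
  mirror_descent_step (fobj F) gamma^-1 xk (qba_step F gamma xk).
Proof.
move=> g0 hc hF hFx rxk G gG.
have [rx1 [s els]] := qba_props gamma rxk hFx.
set x1 := qba_step F gamma xk in rx1 els *.
have dxk := relint_dens rxk; have dx1 := relint_dens rx1.
have gF := grad_F hc hF rxk.
have hG := grad_unique dxk gG gF.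
set K0 := ipmx G xk - ipmx (F xk) xk - gamma * s.
have key : forall w, density w ->
    ipmx G w + gamma^-1^-1 * bregman_negS w xk = gamma * relent w x1 + K0.
  move=> w dw; have [_ tw] := dw; have [_ txk] := dxk.
  have ew : ipmx G w = ipmx (F xk) w - ipmx (F xk) xk + ipmx G xk.
    have := hG w dw; rewrite !ipmxBr; lra.
  have bw : bregman_negS w xk = relent w xk.
    by rewrite /bregman_negS raddfB /= tw txk subrr subr0.
  have rw : relent w xk = relent w x1 - s - gamma^-1 * ipmx w (F xk).
    change (neg_entropy w - ipmx w (logm xk) =
      neg_entropy w - ipmx w (logm x1) - s - gamma^-1 * ipmx w (F xk)).
    rewrite els !ipmxDr !ipmxZr ipmx1 tw /=; ring.
  rewrite invrK bw rw ew (ipmxC (F xk) w) /K0.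
  by field; rewrite gt_eqF.
have r11 : relent x1 x1 = 0 by apply: relent_self; case: rx1 => -[].
split => //; split.
  move=> w dw; rewrite (key _ dw) (key _ dx1) r11 mulr0 add0r lerDr.
  exact: mulr_ge0 (ltW g0) (klein dw rx1).1.
move=> w dw; rewrite (key _ dw) (key _ dx1) r11 mulr0 add0r gerDr => h.
apply: (klein dw rx1).2.
by rewrite -(pmulr_rle0 _ g0).
Qed.

Lemma conv_arith (t A B gx gy gz : R) : 0 <= t <= 1 ->
  A - (t * A + (1 - t) * B) <= gx - gz -> B - (t * A + (1 - t) * B) <= gy - gz ->
  gz <= t * gx + (1 - t) * gy.
Proof. move=> /andP[t0 t1] h1 h2; nra. Qed.

Lemma conv_from_grad (g : M -> R) (Gr : M -> M) :
  (forall x y, relint_density x -> relint_density y ->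
     ipmx (Gr x) (y - x) <= g y - g x) -> convex_on_relint g.
Proof.
move=> h x y t rx ry t01.
have rz := relint_comb rx ry t01.
set z := t%:C *: x + (1 - t)%:C *: y in rz *.
have hx := h z x rz rx; have hy := h z y rz ry.
have ez : ipmx (Gr z) z = t * ipmx (Gr z) x + (1 - t) * ipmx (Gr z) y.
  by rewrite /z ipmxDr !ipmxZr.
rewrite !ipmxBr ez in hx hy.
exact: (conv_arith t01 hx hy).
Qed.

End MD.

Section Fin.
Local Open Scope complex_scope.
Local Open Scope sesquilinear_scope.
Variable R : realType.
Variable n : nat.
Local Notation C := R[i].
Local Notation M := 'M[C]_n.

Lemma smooth_arith (g a b c d e f : R) :
  d - e <= g * (f - a) -> g * (a - b) - (e - c) <= g * f - d - (g * b - c).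
Proof. rewrite !mulrBr; lra. Qed.

Lemma strong_arith (g a b c d e f : R) :
  g * (f - a) <= d - e -> e - c - g * (a - b) <= d - g * f - (c - g * b).
Proof. rewrite !mulrBr; lra. Qed.

Lemma smooth_grad (F : M -> M) (gamma : R) (x y : M) :
  relint_density x -> ipmx y (F y - F x) <= gamma * relent y x ->
  ipmx (gamma%:C *: logm x - F x) (y - x) <=
  (gamma * neg_entropy y - fobj F y) - (gamma * neg_entropy x - fobj F x).
Proof.
move=> [[hx _] _] h.
rewrite ipmxBl ipmxZl !ipmxBr (negS_ip hx) /fobj.
rewrite (ipmxC (logm x) y) (ipmxC (logm x) x) (ipmxC (F x) y) (ipmxC (F x) x).
move: h; rewrite ipmxBr.
change (relent y x) with (neg_entropy y - ipmx y (logm x)).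
exact: smooth_arith.
Qed.

Lemma strong_grad (F : M -> M) (a : R) (x y : M) :
  relint_density x -> a * relent y x <= ipmx y (F y - F x) ->
  ipmx (F x - a%:C *: logm x) (y - x) <=
  (fobj F y - a * neg_entropy y) - (fobj F x - a * neg_entropy x).
Proof.
move=> [[hx _] _] h.
rewrite ipmxBl ipmxZl !ipmxBr (negS_ip hx) /fobj.
rewrite (ipmxC (logm x) y) (ipmxC (logm x) x) (ipmxC (F x) y) (ipmxC (F x) x).
move: h; rewrite ipmxBr.
change (relent y x) with (neg_entropy y - ipmx y (logm x)).
exact: strong_arith.
Qed.

End Fin.

Close Scope complex_scope.
Close Scope sesquilinear_scope.
Unset Implicit Arguments.

Theorem mainTheorem4 (R : realType) (n : nat) (gamma : R)
    (F : 'M[R[i]]_n -> 'M[R[i]]_n) (x0 : 'M[R[i]]_n) :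
  0 < gamma ->
  continuous_on_density F ->
  (forall x : 'M[R[i]]_n, density x -> F x \is hermsymmx) ->
  (forall x y : 'M[R[i]]_n, relint_density x -> relint_density y ->
     0 <= ipmx x (F x - F y) <= gamma * relent x y) ->
  relint_density x0 ->
  (* the QBA iterates are the mirror descent iterates with kernel -S, t_k = 1/gamma *)
  (forall k : nat,
     relint_density (qba_iter F gamma x0 k) /\
     mirror_descent_step (fobj F) gamma^-1
       (qba_iter F gamma x0 k) (qba_iter F gamma x0 k.+1)) /\
  (* (a) *)
  (forall x : 'M[R[i]]_n, relint_density x ->
     is_gradient_at (fobj F) x (F x) /\ fobj F x = ipmx x (F x)) /\
  (* (b) *)
  rel_smooth gamma (fobj F) /\
  (* strong convexity *)
  (forall a : R, 0 < a ->
     (forall x y : 'M[R[i]]_n, relint_density x -> relint_density y ->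
        a * relent x y <= ipmx x (F x - F y)) ->
     rel_strongly_convex a (fobj F)).
Proof.
move=> g0 hc hherm hF rx0.
have rk : forall k, relint_density (qba_iter F gamma x0 k).
  elim=> [|k IH] //.
  exact: (qba_props gamma IH (hherm _ (relint_dens IH))).1.
split.
  move=> k; split; first exact: rk.
  exact: (md_step g0 hc hF (hherm _ (relint_dens (rk k))) (rk k)).
split.
  by move=> x rx; split; [exact: (grad_F hc hF rx) | by []].
split.
  apply: (@conv_from_grad _ _ _ (fun x => (gamma%:C)%C *: logm x - F x)) => x y rx ry.
  apply: (smooth_grad rx).
  by have /andP[_ h] := hF y x ry rx.
move=> a a0 ha.
apply: (@conv_from_grad _ _ _ (fun x => F x - (a%:C)%C *: logm x)) => x y rx ry.
apply: (strong_grad rx).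
exact: ha y x ry rx.
Qed.
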